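(* Let $I$ be a finite set, $T$ a tree on $I$ with $n$ inner vertices, fix a nice total order on $\mathcal{V}(T)$ with associated edge-labeling $\lambda$, and let $\hat{0}=x_0\lhd x_1\lhd\dots\lhd x_n=T$ be the unique maximal chain of $[\hat{0},T]$ with increasing labels. For $j\in[n]$ let $\mathsf{B}_j$ be the set of atoms $a$ of $[\hat{0},T]$ with $\lambda(\hat{0},a)=j$. Let $i\in[n]$ and, for each $j\in[i]$, let $a_j\in\mathsf{B}_j$. Then $x_i=a_1\vee a_2\vee\dots\vee a_i$.
   Context: A tree on a finite set $I$ is a (non-planar) rooted binary tree whose leaves are bijectively labeled by $I$: vertices are inner vertices (valence $3$) and leaves and the root (valence $1$), edges oriented towards the root; one-leaf trees are allowed. A forest on $I$ is a set of trees whose leaf sets partition $I$; $\mathcal{V}(F)$ is its set of inner vertices. For forests $F,G$ on $I$, $F \leq G$ if there is a continuous map $F\to G$ which (D1) is increasing with respect to orientation towards the root, (D2) maps inner vertices to inner vertices injectively, (D3) is the identity of $I$ on leaves, (D4) is injective on each tree of $F$. This gives the poset $\operatorname{For}(I)$, graded by number of inner vertices, with minimum $\hat{0}$ (no inner vertices); $[\hat{0},T]$ is a lattice with join $\vee$. For $F \leq G \leq T$ inner vertices are regarded as subsets $\mathcal{V}(F)\subseteq\mathcal{V}(G)\subseteq\mathcal{V}(T)$; if $F\lhd G$ there is a unique $v$ with $\mathcal{V}(G)=\mathcal{V}(F)\cup\{v\}$. Partial order on $\mathcal{V}(T)$: $v\preceq v'$ if $v'$ lies on the path between the root and $v$. A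 nice total order is any total order on $\mathcal{V}(T)$ extending $\preceq$; using it the inner vertices are labeled $1,\dots,n$ increasingly and identified with their labels. The edge-labeling is $\lambda(F,G)$ := the unique element of $\mathcal{V}(G)\setminus\mathcal{V}(F)$ for $F\lhd G$ in $[\hat{0},T]$. Atoms are the elements covering $\hat{0}$; a chain is increasing if its sequence of labels is increasing. *)

(* Defs.v *)
(* Combinatorial encoding of forests on a finite set I:
   a forest is given by the set of leaf-sets ("clusters") of its inner
   vertices. *)
From mathcomp Require Import all_boot.
Set Implicit Arguments. Unset Strict Implicit. Unset Printing Implicit Defensive.

Definition nodes (I : finType) (H : {set {set I}}) : {set {set I}} :=
  H :|: [set [set x] | x : I].

Definition children (I : finType) (H : {set {set I}}) (A : {set I})
  : {set {set I}} :=
  [set C in nodes H | (C \proper A) &&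
     [forall D in nodes H, (C \proper D) ==> ~~ (D \proper A)]].

Definition roots (I : finType) (H : {set {set I}}) : {set {set I}} :=
  [set C in nodes H | [forall D in nodes H, ~~ (C \proper D)]].

Definition laminar (I : finType) (H : {set {set I}}) : bool :=
  [forall A in H, forall B in H,
     [|| A \subset B, B \subset A | [disjoint A & B]]].

(* A forest on I (binary, rooted, non-planar, leaves labelled by I),
   encoded by the family of leaf sets of its inner vertices. *)
Definition is_forest (I : finType) (H : {set {set I}}) : bool :=
  [forall A in H, 1 < #|A|] && laminar H &&
  [forall A in H, #|children H A| == 2].

Definition is_tree (I : finType) (H : {set {set I}}) : bool :=
  is_forest H && (#|roots H| == 1).

(* phi : V(F) -> V(G) is the restriction to inner vertices of a map F -> G
   satisfying (D1)-(D4): injective on inner vertices, each inner vertex is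
   sent to an inner vertex lying above all its leaves, and the two branches
   at an inner vertex are sent into the two distinct branches at its image. *)
Definition embedding (I : finType) (F G : {set {set I}})
    (phi : {set I} -> {set I}) : Prop :=
  {in F &, injective phi} /\
  forall A, A \in F ->
    [/\ phi A \in G, A \subset phi A &
      exists A1 A2 B1 B2,
        [/\ children F A = [set A1; A2], A1 != A2,
            [&& B1 \in children G (phi A), B2 \in children G (phi A)
              & B1 != B2] & (A1 \subset B1) && (A2 \subset B2)]].

Definition le_forest (I : finType) (F G : {set {set I}}) : Prop :=
  exists phi, embedding F G phi.

Definition covers (I : finType) (F G : {set {set I}}) : Prop :=
  [/\ is_forest F, is_forest G, le_forest F G, F != G &
      forall Z, is_forest Z -> le_forest F Z -> le_forest Z G ->
        Z = F \/ Z = G].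

(* A nice total order on V(T), given directly by the associated increasing
   labelling lab : V(T) -> {1,...,n} (a bijection), extending the partial
   order v <= v' iff v' lies on the path from the root to v, i.e. the
   leaf set of v is contained in that of v'. *)
Definition nice_labeling (I : finType) (T : {set {set I}}) (n : nat)
    (lab : {set I} -> nat) : Prop :=
  [/\ #|T| = n, {in T &, injective lab},
      (forall v, v \in T -> 0 < lab v <= n) &
      (forall v w, v \in T -> w \in T -> v \proper w -> lab v < lab w)].

(* Edge label lambda(F,G) = j for F <| G in [0,T]: with V(F), V(G) viewed as
   subsets of V(T) via the maps F -> T, G -> T, V(G) = V(F) + {v}, lab v = j. *)
Definition is_label (I : finType) (T : {set {set I}}) (lab : {set I} -> nat)
    (F G : {set {set I}}) (j : nat) : Prop :=
  exists phiF phiG v,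
    [/\ embedding F T phiF, embedding G T phiG, v \notin phiF @: F,
        phiG @: G = v |: (phiF @: F) & j = lab v].

Definition is_join_in (I : finType) (T : {set {set I}})
    (a : nat -> {set {set I}}) (i : nat) (x : {set {set I}}) : Prop :=
  [/\ is_forest x, le_forest x T,
      (forall j, 0 < j <= i -> le_forest (a j) x) &
      (forall y, is_forest y -> le_forest y T ->
          (forall j, 0 < j <= i -> le_forest (a j) y) -> le_forest x y)].

(* Main.v *)
Require Import Defs.
From mathcomp Require Import all_boot zify.
Set Implicit Arguments. Unset Strict Implicit. Unset Printing Implicit Defensive.

Section L.
Variable I : finType.
Implicit Types (H F G T S : {set {set I}}) (A B C D : {set I}).

Lemma forest_card H A : is_forest H -> A \in H -> 1 < #|A|.
Proof. by case/andP=> /andP[/forallP h _] _ AH; have := h A; rewrite AH. Qed.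

Lemma forest_lam H : is_forest H -> laminar H.
Proof. by case/andP=> /andP[]. Qed.

Lemma forest_ch H A : is_forest H -> A \in H ->
  exists C1 C2, C1 != C2 /\ children H A = [set C1; C2].
Proof.
case/andP=> _ /forallP h AH; have := h A; rewrite AH /= => /cards2P; by [].
Qed.

Lemma nodes_n0 H C : is_forest H -> C \in nodes H -> exists x, x \in C.
Proof.
move=> fH; rewrite inE => /orP[CH|/imsetP[x _ ->]]; last by exists x; rewrite inE.
have h := forest_card fH CH; case: (set_0Vmem C) => [C0|[x xC]]; last by exists x.
by rewrite C0 cards0 in h.
Qed.

Lemma nodes_lam H C D x : is_forest H -> C \in nodes H -> D \in nodes H ->
  x \in C -> x \in D -> (C \subset D) \/ (D \subset C).
Proof.
move=> fH CN DN xC xD; move: CN DN xC xD; rewrite !inE.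
case/orP=> [CH|/imsetP[y _ ->]]; last first.
  by move=> _; rewrite ?inE => /eqP eq xD; left; rewrite sub1set -eq.
case/orP=> [DH|/imsetP[y _ ->]]; last first.
  by move=> xC; rewrite ?inE => /eqP eq; right; rewrite sub1set -eq.
move=> xC xD; have /forallP/(_ C) := forest_lam fH; rewrite CH /=.
move=> /forallP/(_ D); rewrite DH /= => /or3P[]; [by left|by right|].
by move=> dis; move: (disjointFr dis xC); rewrite xD.
Qed.

Lemma childrenP H A C : C \in children H A ->
  [/\ C \in nodes H, C \proper A &
      forall D, D \in nodes H -> C \proper D -> ~~ (D \proper A)].
Proof.
rewrite inE => /andP[CN /andP[CA /forallP h]]; split=> // D DN CD.
by have := h D; rewrite DN CD.
Qed.

Lemma children_eq H A C C' x : is_forest H ->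
  C \in children H A -> C' \in children H A -> x \in C -> x \in C' -> C = C'.
Proof.
move=> fH /childrenP[CN CA hC] /childrenP[C'N C'A hC'] xC xC'.
case: (nodes_lam fH CN C'N xC xC') => sub.
  apply/eqP; rewrite eqEproper sub /=; apply/negP=> pr.
  by have := hC _ C'N pr; rewrite C'A.
apply/esym/eqP; rewrite eqEproper sub /=; apply/negP=> pr.
by have := hC' _ CN pr; rewrite CA.
Qed.

Lemma in_child H A D : D \in nodes H -> D \proper A ->
  exists2 C, C \in children H A & D \subset C.
Proof.
move=> DN DA.
pose P := [pred E | (E \in nodes H) && (D \subset E) && (E \proper A)].
have PD : P D by rewrite /= DN subxx DA.
case: (arg_maxnP (fun E : {set I} => #|E|) PD) => E /= /andP[/andP[EN DE] EA] mx.
exists E => //; rewrite inE EN EA /=; apply/forallP=> E'; apply/implyP=> E'N.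
apply/implyP=> EE'; apply/negP=> E'A.
have := mx E'; rewrite /= E'N E'A (subset_trans DE (proper_sub EE')) /=.
by move=> /(_ isT); rewrite leqNgt proper_card.
Qed.

Lemma forest_union H A C1 C2 : is_forest H -> A \in H ->
  children H A = [set C1; C2] -> A = C1 :|: C2.
Proof.
move=> fH AH ch; apply/setP=> x; apply/idP/idP.
  move=> xA; have xN : [set x] \in nodes H by rewrite /nodes inE imset_f ?orbT.
  have xP : [set x] \proper A.
    by rewrite properEcard sub1set xA cards1 (forest_card fH AH).
  case: (in_child xN xP) => C; rewrite ch !inE => /orP[]/eqP-> ;
  by rewrite sub1set => xC1; rewrite xC1 ?orbT.
have sub E : E \in children H A -> E \subset A by case/childrenP=> _ /proper_sub.
by rewrite inE => /orP[] xC; apply: (subsetP (sub _ _)) xC; rewrite ch !inE eqxx ?orbT.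
Qed.


Lemma emb_notproper F T phi phi' A : is_forest F -> is_forest T ->
  embedding F T phi -> embedding F T phi' -> A \in F -> ~~ (phi A \proper phi' A).
Proof.
move=> fF fT [_ e] [_ e'] AF; apply/negP=> pr.
case: (e A AF) => vT Av _.
case: (e' A AF) => v'T Av' [A1 [A2 [B1 [B2 [chA nA /and3P[B1c B2c nB] /andP[s1 s2]]]]]].
have vN : phi A \in nodes T by rewrite /nodes inE vT.
case: (in_child vN pr) => C Cc vC.
have A1c : A1 \in children F A by rewrite chA !inE eqxx.
have A2c : A2 \in children F A by rewrite chA !inE eqxx orbT.
have [A1N /proper_sub A1A _] := childrenP A1c.
have [A2N /proper_sub A2A _] := childrenP A2c.
have [y yA1] := nodes_n0 fF A1N.
have [z zA2] := nodes_n0 fF A2N.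
have inC w : w \in A -> w \in C by move=> wA; apply: (subsetP vC); apply: (subsetP Av).
have e1 := children_eq fT Cc B1c (inC _ (subsetP A1A _ yA1)) (subsetP s1 _ yA1).
have e2 := children_eq fT Cc B2c (inC _ (subsetP A2A _ zA2)) (subsetP s2 _ zA2).
by move: nB; rewrite -e1 -e2 eqxx.
Qed.

Lemma emb_unique F T phi phi' : is_forest F -> is_forest T ->
  embedding F T phi -> embedding F T phi' -> {in F, phi =1 phi'}.
Proof.
move=> fF fT e e' A AF.
have AN : A \in nodes F by rewrite /nodes inE AF.
have [y yA] := nodes_n0 fF AN.
case: (e.2 A AF) => vT Av _; case: (e'.2 A AF) => v'T Av' _.
have vN : phi A \in nodes T by rewrite /nodes inE vT.
have v'N : phi' A \in nodes T by rewrite /nodes inE v'T.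
case: (nodes_lam fT vN v'N (subsetP Av _ yA) (subsetP Av' _ yA)) => sub.
  by apply/eqP; rewrite eqEproper sub (emb_notproper fF fT e e' AF).
by apply/esym/eqP; rewrite eqEproper sub (emb_notproper fF fT e' e AF).
Qed.

Lemma emb_comp F G H alpha chi : embedding F G alpha -> embedding G H chi ->
  embedding F H (chi \o alpha).
Proof.
move=> [ia ea] [ic ec]; split.
  move=> A B AF BF /= eq; apply: ia => //; apply: ic => //.
    by case: (ea _ AF).
  by case: (ea _ BF).
move=> A AF.
case: (ea A AF) => aG Aa [A1 [A2 [B1 [B2 [chA nA /and3P[B1c B2c nB] /andP[s1 s2]]]]]].
case: (ec _ aG) => cH ac [C1 [C2 [D1 [D2 [chB nC /and3P[D1c D2c nD] /andP[t1 t2]]]]]].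
split => //=; first exact: subset_trans Aa ac.
move: B1c B2c; rewrite chB !inE => /orP[]/eqP e1 /orP[]/eqP e2.
- by move: nB; rewrite e1 e2 eqxx.
- exists A1, A2, D1, D2; split => //; first by rewrite D1c D2c nD.
  by rewrite (subset_trans s1) ?e1 // (subset_trans s2) ?e2.
- exists A1, A2, D2, D1; split => //; first by rewrite D1c D2c eq_sym nD.
  by rewrite (subset_trans s1) ?e1 // (subset_trans s2) ?e2.
- by move: nB; rewrite e1 e2 eqxx.
Qed.

Section Down.
Variables (T S : {set {set I}}).
Hypothesis ST : S \subset T.
Hypothesis hS : forall v w, v \in S -> w \in T -> w \proper v -> w \in S.

Lemma down_nodes v D : v \in S -> D \proper v -> (D \in nodes S) = (D \in nodes T).
Proof.
move=> vS Dv; rewrite /nodes !inE.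
have -> // : (D \in S) = (D \in T).
apply/idP/idP => [/(subsetP ST)//|DT]; exact: hS vS DT Dv.
Qed.

Lemma down_children v : v \in S -> children S v = children T v.
Proof.
move=> vS; apply/setP=> C; rewrite /children [LHS]in_set [RHS]in_set.
case Cv: (C \proper v); last by rewrite !andbF.
rewrite (down_nodes vS Cv) /=; congr (_ && _).
apply: eq_forallb => D.
case: (boolP (D \proper v)) => Dv; first by rewrite (down_nodes vS Dv).
by rewrite !implybT.
Qed.

Lemma emb_down F phi : embedding F T phi -> (forall A, A \in F -> phi A \in S) ->
  embedding F S phi.
Proof.
move=> [inj e] hin; split => // A AF.
case: (e A AF) => _ Ap [A1 [A2 [B1 [B2 [h1 h2 h3 h4]]]]]; split => //; first exact: hin.
by exists A1, A2, B1, B2; rewrite (down_children (hin _ AF)).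
Qed.
End Down.

Lemma emb_fix G T chi : is_forest G -> is_forest T -> embedding G T chi ->
  forall v : {set I}, (forall w, w \in T -> w \proper v -> w \in chi @: G) ->
  forall A, A \in G -> chi A = v -> A = v /\ children G A = children T v.
Proof.
move=> fG fT [ic ec] v; have [k] := ubnP #|v|; elim: k v => // k IH v.
rewrite ltnS => vk hv A AG chiA.
case: (ec A AG) => vT Av [A1 [A2 [B1 [B2 [chA nA /and3P[B1c B2c nB] /andP[s1 s2]]]]]].
rewrite chiA in vT B1c B2c Av.
have AN : A \in nodes G by rewrite /nodes inE AG.
have key : forall A' B' A'' B'', A' \in children G A -> A'' \in children G A ->
    B' \in children T v -> B'' \in children T v -> B' != B'' ->
    A' \subset B' -> A'' \subset B'' -> A' = B'.
  move=> A' B' A'' B'' A'c A''c B'c B''c nB' sA' sA''.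
  have [A'N /proper_sub A'A mx] := childrenP A'c.
  have [A''N /proper_sub A''A _] := childrenP A''c.
  have [x xA'] := nodes_n0 fG A'N.
  have [B'N B'v _] := childrenP B'c.
  move: B'N; rewrite /nodes inE => /orP[B'T|/imsetP[p _ eB]]; last first.
    have := subsetP sA' _ xA'; rewrite eB inE => /eqP xp.
    apply/eqP; rewrite eqEsubset -eB sA' /= eB sub1set -xp //.
  have : B' \in chi @: G by exact: hv B'T B'v.
  case/imsetP => A0 A0G eA0.
  have [eA0' _] : A0 = B' /\ _ := IH B' (leq_trans (proper_card B'v) vk)
     (fun w wT wB => hv w wT (proper_trans wB B'v)) A0 A0G (esym eA0).
  have B'G : B' \in nodes G by rewrite /nodes inE -eA0' A0G.
  have [y yA''] := nodes_n0 fG A''N.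
  have yB' : y \notin B'.
    apply/negP=> yB'; move: nB'; rewrite (children_eq fT B'c B''c yB' (subsetP sA'' _ yA'')).
    by rewrite eqxx.
  case: (nodes_lam fG AN B'G (subsetP A'A _ xA') (subsetP sA' _ xA')) => sub.
    by move: yB'; rewrite (subsetP sub _ (subsetP A''A _ yA'')).
  have B'A : B' \proper A.
    rewrite properE sub /=; apply/negP=> /subsetP h.
    by move: yB'; rewrite h // (subsetP A''A _ yA'').
  apply/eqP; rewrite eqEproper sA' /=; apply/negP=> pr.
  by have := mx B' B'G pr; rewrite B'A.
have A1c : A1 \in children G A by rewrite chA !inE eqxx.
have A2c : A2 \in children G A by rewrite chA !inE eqxx orbT.
have e1 := key _ _ _ _ A1c A2c B1c B2c nB s1 s2.
have nB' : B2 != B1 by rewrite eq_sym.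
have e2 := key _ _ _ _ A2c A1c B2c B1c nB' s2 s1.
have [C1 [C2 [nC chv]]] := forest_ch fT vT.
have chv' : children T v = [set B1; B2].
  apply/eqP; rewrite eq_sym eqEcard; apply/andP; split.
    by apply/subsetP=> z /set2P[]->.
  by rewrite chv !cards2 nC nB.
rewrite chv' chA e1 e2; split => //.
by rewrite (forest_union fG AG chA) (forest_union fT vT chv') e1 e2.
Qed.

Lemma incr_id (n : nat) (f : nat -> nat) : (forall k, k < n -> 0 < f k <= n) ->
  (forall k, k.+1 < n -> f k < f k.+1) -> forall k, k < n -> f k = k.+1.
Proof.
move=> hb hi.
have lo : forall k, k < n -> k < f k.
  elim => [|k IH] kn; first by case/andP: (hb 0 kn).
  have := hi k kn; have := IH (ltnW kn); lia.
have up : forall d k, k + d < n -> f k + d <= f (k + d).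
  elim => [|d IH] k kd; first by rewrite !addn0.
  have h1 : k + d < n by lia.
  have h2 : (k + d).+1 < n by lia.
  have := IH k h1; have := hi (k + d) h2; rewrite !addnS; lia.
move=> k kn; have := lo k kn.
have h3 : k + (n.-1 - k) < n by lia.
have := up (n.-1 - k) k h3; have := hb (k + (n.-1 - k)) h3; lia.
Qed.
End L.

Theorem lemma5p4 (I : finType) (T : {set {set I}}) (n : nat)
    (lab : {set I} -> nat) (x : nat -> {set {set I}}) (l : nat -> nat)
    (a : nat -> {set {set I}}) (i : nat) :
  is_tree T ->
  nice_labeling T n lab ->
  (* x_0 <| x_1 <| ... <| x_n is a maximal chain of [0,T] *)
  x 0 = set0 -> x n = T ->
  (forall k, k <= n -> is_forest (x k) /\ le_forest (x k) T) ->
  (forall k, k < n -> covers (x k) (x k.+1)) ->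
  (* with increasing labels l 0 < l 1 < ... < l (n-1) *)
  (forall k, k < n -> is_label T lab (x k) (x k.+1) (l k)) ->
  (forall k, k.+1 < n -> l k < l k.+1) ->
  0 < i <= n ->
  (* a_j in B_j for j in [i] *)
  (forall j, 0 < j <= i ->
     [/\ le_forest (a j) T, covers set0 (a j) & is_label T lab set0 (a j) j]) ->
  is_join_in T a i (x i).
Proof.
move=> tT nl x0 _ fx _ labx linc /andP[i0 iN] ha.
have fT : is_forest T by case/andP: tT.
case: nl => cardT labinj labrng labmon.
have vinT : forall F G phiG v, embedding G T phiG -> phiG @: G = v |: F -> v \in T.
  move=> F G phiG v eG eim.
  have : v \in phiG @: G by rewrite eim setU11.
  by case/imsetP => A AG ->; case: (eG.2 A AG).
have lk : forall k, k < n -> l k = k.+1.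
  apply: incr_id => // k kn.
  case: (labx k kn) => pF [pG [v [_ eG _ eim ->]]].
  exact: labrng (vinT _ _ _ _ eG eim).
have img : forall k, k <= n -> forall phi, embedding (x k) T phi ->
    phi @: x k = [set v in T | lab v <= k].
  elim => [|k IH] kn phi e.
    rewrite x0 imset0; apply/esym/setP => v; rewrite !inE.
    case vT: (v \in T) => //=.
    by have /andP[h _] := labrng v vT; rewrite leqNgt h.
  case: (labx k kn) => pF [pG [v [eF eG vnot eim lv]]].
  have fk1 := (fx k.+1 kn).1.
  rewrite (eq_in_imset (emb_unique fk1 fT e eG)) eim (IH (ltnW kn) pF eF).
  rewrite lk // in lv.
  have vT := vinT _ _ _ _ eG eim.
  apply/setP => w; rewrite !inE.
  case: (eqVneq w v) => [->|wv] /=; first by rewrite vT -lv leqnn.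
  case wT: (w \in T) => //=.
  have : lab w != k.+1.
    rewrite lv; apply: contra wv => /eqP e'; apply/eqP; exact: labinj.
  by rewrite [in RHS]leq_eqVlt ltnS => /negbTE ->.
have [fxi [psi epsi]] := fx i iN.
have Simg := img i iN psi epsi.
set S := [set v in T | lab v <= i] in Simg.
have Sdown : forall v w, v \in S -> w \in T -> w \proper v -> w \in S.
  move=> v w; rewrite !inE => /andP[vT vi] wT wv.
  by rewrite wT (leq_trans _ vi) // ltnW // labmon.
have ST : S \subset T by apply/subsetP => v; rewrite inE => /andP[].
have xiS : x i = S.
  have fixp : {in x i, forall A, A = psi A}.
    move=> A AG.
    have psiS : psi A \in S by rewrite -Simg imset_f.
    have hv : forall w, w \in T -> w \proper psi A -> w \in psi @: x i.
      by move=> w wT wv; rewrite Simg; exact: Sdown psiS wT wv.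
    by have [h _] := emb_fix fxi fT epsi hv AG erefl.
  by rewrite -Simg -{1}(imset_id (x i)); apply: eq_in_imset.
split => //; first by exists psi.
- move=> j hj; case: (ha j hj) => _ [_ fa _ _ _] [pF [pG [v [_ eG _ eim lv]]]].
  rewrite imset0 setU0 in eim.
  exists pG; rewrite xiS; apply: (emb_down ST Sdown eG) => A AA.
  have : pG A \in [set v] by rewrite -eim imset_f.
  rewrite inE => /eqP ->; rewrite inE (vinT _ _ _ _ eG (etrans eim (esym (setU0 _)))).
  by rewrite -lv; case/andP: hj.
- move=> y fy [chi ech] hy.
  have inS : S \subset chi @: y.
    apply/subsetP => w; rewrite inE => /andP[wT wi].
    have hj : 0 < lab w <= i by rewrite wi andbT; case/andP: (labrng w wT).
    case: (ha _ hj) => _ [_ fa _ _ _] [pF [pG [v [_ eG _ eim lv]]]].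
    rewrite imset0 setU0 in eim.
    case: (hy _ hj) => al eal.
    have ec := emb_comp eal ech.
    have : v \in pG @: a (lab w) by rewrite eim inE.
    case/imsetP => A AA vA.
    have e1 := emb_unique fa fT eG ec AA.
    have vT : v \in T by rewrite vA; case: (eG.2 A AA).
    have wv : w = v by apply: labinj.
    rewrite wv vA e1 /=; apply: imset_f; by case: (eal.2 A AA).
  rewrite xiS; exists id; split; first by move=> ? ? _ _.
  move=> v vS.
  have vT : v \in T by apply: (subsetP ST).
  have [vy chv] : v \in y /\ children y v = children T v.
    move: (subsetP inS v vS) => /imsetP [A Ay eA].
    have hv : forall w, w \in T -> w \proper v -> w \in chi @: y.
      by move=> w wT wv; apply: (subsetP inS); exact: Sdown vS wT wv.
    have [AE chE] := emb_fix fy fT ech hv Ay (esym eA).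
    by split; [rewrite -AE | rewrite -{1}AE].
  split => //.
  case: (forest_ch fT vT) => C1 [C2 [nC chC]].
  exists C1, C2, C1, C2; split => //.
    by rewrite (down_children ST Sdown vS) chC.
  by rewrite chv chC !inE !eqxx orbT nC.
  by rewrite !subxx.
Qed.
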